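(* Let $D=\mathrm{diag}(d_1,\dots,d_n)\in\mathbb{D}^n_+$, $W\in\mathbb{R}^{n\times n}$, $u\in\mathbb{R}^n$, $A:=W-D$, and $\mathcal X=\{x\in\mathbb{R}^n: Dx\in[0,1]^n\}$. For $\tau>0$ define $f_\tau:\mathcal X\to\mathbb{R}^n$ by $f_\tau(x)=\frac1\tau\left(-Dx+[Dx+\tau(Ax+u)]_0^1\right)$. Then: (i) the set of equilibria $\{x\in\mathcal X: f_\tau(x)=0\}$ does not depend on $\tau>0$; (ii) if $A$ is Lyapunov diagonally stable, then this common equilibrium set consists of exactly one point.
   Context: $\mathbb{D}^n_+$ is the set of $n\times n$ diagonal matrices with positive diagonal entries; $[z]_0^1=\max(0,\min(z,1))$ elementwise. A matrix $M$ is Lyapunov diagonally stable if $M^\top\Lambda+\Lambda M\prec0$ for some $\Lambda\in\mathbb{D}^n_+$. *)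

(* Defs.v *)
From HB Require Import structures.
From mathcomp Require Import all_boot all_order all_algebra.
From mathcomp Require Import reals.
Set Implicit Arguments. Unset Strict Implicit. Unset Printing Implicit Defensive.
Import Order.TTheory GRing.Theory Num.Theory.
Local Open Scope ring_scope.

Section Defs.
Variable R : realType.

Definition clamp01 (z : R) : R := Num.max 0 (Num.min z 1).

Definition clampv (n : nat) (v : 'cV[R]_n) : 'cV[R]_n := map_mx clamp01 v.

Definition Dmat (n : nat) (d : 'rV[R]_n) : 'M[R]_n := diag_mx d.

Definition inX (n : nat) (d : 'rV[R]_n) (x : 'cV[R]_n) : Prop :=
  forall i : 'I_n, 0 <= (Dmat d *m x) i 0 <= 1.

Definition f_tau (n : nat) (d : 'rV[R]_n) (W : 'M[R]_n) (u : 'cV[R]_n)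
  (tau : R) (x : 'cV[R]_n) : 'cV[R]_n :=
  let D := Dmat d in
  let A := W - D in
  tau^-1 *: (- (D *m x) + clampv (D *m x + tau *: (A *m x + u))).

Definition equilibrium (n : nat) (d : 'rV[R]_n) (W : 'M[R]_n) (u : 'cV[R]_n)
  (tau : R) (x : 'cV[R]_n) : Prop :=
  inX d x /\ f_tau d W u tau x = 0.

Definition neg_def (n : nat) (S : 'M[R]_n) : Prop :=
  forall v : 'cV[R]_n, v != 0 -> (v^T *m S *m v) 0 0 < 0.

Definition lyap_diag_stable (n : nat) (M : 'M[R]_n) : Prop :=
  exists lam : 'rV[R]_n, (forall i, 0 < lam 0 i) /\
    neg_def (M^T *m diag_mx lam + diag_mx lam *m M).

End Defs.

(* Main.v *)
Require Import Defs.
From HB Require Import structures.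
From mathcomp Require Import all_boot all_order all_algebra.
From mathcomp Require Import reals.
From mathcomp Require Import ring lra.
Set Implicit Arguments. Unset Strict Implicit. Unset Printing Implicit Defensive.
Import Order.TTheory GRing.Theory Num.Theory.
Local Open Scope ring_scope.

Section Gen.
Variable R : realFieldType.
Variable n : nat.
Variable d : 'I_n -> R.
Variable A : 'M[R]_n.
Variable u : 'I_n -> R.
Variable lam : 'I_n -> R.
Hypothesis hd : forall i, 0 < d i.
Hypothesis hlam : forall i, 0 < lam i.
Hypothesis hQ : forall v : 'cV[R]_n, v != 0 ->
  \sum_i lam i * (v i 0 * (A *m v) i 0) < 0.

Definition cond (fr : bool) (l h di y w : R) : Prop :=
  if fr then w = 0 else
  (l <= di * y <= h /\ forall t, l <= t <= h -> w * (t - di * y) <= 0).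

Definition wv (x : 'cV[R]_n) i := (A *m x) i 0 + u i.

Definition sol (fr : 'I_n -> bool) (lo hi : 'I_n -> R) (x : 'cV[R]_n) :=
  forall i, cond (fr i) (lo i) (hi i) (d i) (x i 0) (wv x i).

Lemma mono fr l h di y1 y2 w1 w2 : 0 < di ->
  cond fr l h di y1 w1 -> cond fr l h di y2 w2 -> 0 <= (w1 - w2) * (y1 - y2).
Proof.
move=> hdi; case: fr => /=; first by move=> -> ->; rewrite subrr mul0r.
move=> [/andP[l1 h1] H1] [/andP[l2 h2] H2].
have := H1 (di * y2); rewrite l2 h2 => /(_ isT) => e1.
have := H2 (di * y1); rewrite l1 h1 => /(_ isT) => e2.
have : 0 <= di * ((w1 - w2) * (y1 - y2)).
  have -> : di * ((w1 - w2) * (y1 - y2)) =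
    - (w1 * (di * y2 - di * y1)) - (w2 * (di * y1 - di * y2)) by ring.
  lra.
by rewrite pmulr_rge0.
Qed.

Lemma zero_of_mono (v : 'cV[R]_n) :
  (forall i, 0 <= (A *m v) i 0 * v i 0) -> v = 0.
Proof.
move=> H; case: (eqVneq v 0) => // /hQ; rewrite ltNge => /negP; case.
apply: sumr_ge0 => i _; apply: mulr_ge0; first exact: ltW.
by rewrite mulrC.
Qed.

Lemma Av_diff (x1 x2 : 'cV[R]_n) i : (A *m (x1 - x2)) i 0 = wv x1 i - wv x2 i.
Proof. by rewrite mulmxBr /wv !mxE opprD addrACA subrr addr0. Qed.

Lemma sol_unique fr lo hi x1 x2 : sol fr lo hi x1 -> sol fr lo hi x2 -> x1 = x2.
Proof.
move=> s1 s2; apply/eqP; rewrite -subr_eq0; apply/eqP; apply: zero_of_mono => i.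
rewrite Av_diff !mxE; exact: mono (hd i) (s1 i) (s2 i).
Qed.

Lemma base fr lo hi : (forall i, ~~ fr i -> lo i = hi i) -> exists x, sol fr lo hi x.
Proof.
move=> Hb.
pose M := \matrix_(i, j) (if fr i then A i j else (i == j)%:R).
pose r : 'cV[R]_n := \col_i (if fr i then - u i else lo i / d i).
have uM : M \in unitmx.
  rewrite unitmxE -det_tr unitfE; apply/negP => /det0P [v vn0 vM].
  have : v^T = 0.
    apply: zero_of_mono => i.
    have := congr1 (fun m : 'M_(1, n) => m 0 i) vM; rewrite !mxE.
    case fri: (fr i).
    - move=> e; rewrite [X in X * _](_ : _ = 0) ?mul0r //.
      rewrite -[RHS]e; apply: eq_bigr => j _; rewrite !mxE fri mulrC.
      by [].
    - rewrite (bigD1 i) //= big1 => [|j /negbTE ji]; last by rewrite !mxE fri eq_sym ji mulr0.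
      by rewrite !mxE fri eqxx mulr1 addr0 => ->; rewrite mulr0.
  by move=> /(congr1 trmx); rewrite trmxK trmx0 => e; move: vn0; rewrite e eqxx.
exists (invmx M *m r) => i.
have := congr1 (fun m : 'cV_n => m i 0) (mulKVmx uM r).
rewrite [X in X = _ -> _]mxE mxE /cond /wv.
case fri: (fr i).
- move=> e; rewrite [(A *m _) i 0]mxE.
  rewrite (eq_bigr (fun j => M i j * (invmx M *m r) j 0)) ?e ?addNr // => j _.
  by rewrite /M mxE fri.
- rewrite (bigD1 i) //= big1 => [|j /negbTE ji]; last by rewrite /M mxE fri eq_sym ji mul0r.
  rewrite /M mxE fri eqxx mul1r addr0 => ->.
  have hdi := hd i; rewrite mulrC divfK ?gt_eqF //.
  rewrite Hb ?fri // lexx; split => // t /andP[t1 t2].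
  have -> : t = hi i by apply/le_anti; rewrite t1 t2.
  by rewrite subrr mulr0.
Qed.

Lemma mono_all x1 x2 :
  (forall i, 0 <= (wv x1 i - wv x2 i) * (x1 i 0 - x2 i 0)) -> x1 = x2.
Proof.
move=> H; apply/eqP; rewrite -subr_eq0; apply/eqP; apply: zero_of_mono => i.
by rewrite Av_diff !mxE.
Qed.

Lemma exists_sol (m : nat) : forall (fr : 'I_n -> bool) (lo hi : 'I_n -> R), (forall i, lo i <= hi i) ->
  leq #|[set i | ~~ fr i && (lo i < hi i)]| m -> exists x, sol fr lo hi x.
Proof.
elim: m => [|m IH] fr lo hi hlh hc;
  (case: (pickP [pred i | ~~ fr i && (lo i < hi i)]) => [k /andP[frk lhk] | none];
  last by apply: base => i fri; apply/le_anti; rewrite hlh /= leNgt;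
     have := none i; rewrite /= fri /= => ->).
  have : k \in [set i | ~~ fr i && (lo i < hi i)] by rewrite inE frk lhk.
  by move=> kin; move: hc; rewrite (cardsD1 k) kin.
set S := [set i | ~~ fr i && (lo i < hi i)].
have hS : leq #|S :\ k| m.
  by move: hc; rewrite (cardsD1 k) inE frk lhk.
pose fr' := fun i => (i == k) || fr i.
pose hi0 := fun i => if i == k then lo k else hi i.
pose lo1 := fun i => if i == k then hi k else lo i.
have [a sa] : exists x, sol fr lo hi0 x.
  apply: IH => [i|]; first by rewrite /hi0; case: eqP => [->|]; rewrite ?lexx.
  apply: leq_trans hS; apply: subset_leq_card; apply/subsetP => i.
  rewrite !inE /hi0; case: eqP => [->|_]; first by rewrite ltxx andbF.
  by [].
have [b sb] : exists x, sol fr lo1 hi x.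
  apply: IH => [i|]; first by rewrite /lo1; case: eqP => [->|]; rewrite ?lexx.
  apply: leq_trans hS; apply: subset_leq_card; apply/subsetP => i.
  rewrite !inE /lo1; case: eqP => [->|_]; first by rewrite ltxx andbF.
  by [].
have [z sz] : exists x, sol fr' lo hi x.
  apply: IH => //.
  apply: leq_trans hS; apply: subset_leq_card; apply/subsetP => i.
  by rewrite !inE /fr' negb_or; case: eqP.
have hdk := hd k.
have ak := sa k; rewrite /cond (negbTE frk) /hi0 eqxx in ak.
have bk := sb k; rewrite /cond (negbTE frk) /lo1 eqxx in bk.
have zk := sz k; rewrite /cond /fr' eqxx /= in zk.
case: ak => /andP[ak1 ak2] _; have ea : d k * a k 0 = lo k by apply/le_anti; rewrite ak1 ak2.
case: bk => /andP[bk1 bk2] _; have eb : d k * b k 0 = hi k by apply/le_anti; rewrite bk1 bk2.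
case: (leP (wv a k) 0) => wa.
  exists a => i; case: (eqVneq i k) => [->|ik].
    rewrite /cond (negbTE frk) ea lexx ltW //; split => // t /andP[t1 t2].
    by apply: mulr_le0_ge0 => //; rewrite subr_ge0.
  by have := sa i; rewrite /hi0 (negbTE ik).
case: (leP 0 (wv b k)) => wb.
  exists b => i; case: (eqVneq i k) => [->|ik].
    rewrite /cond (negbTE frk) eb lexx ltW //; split => // t /andP[t1 t2].
    by apply: mulr_ge0_le0 => //; rewrite subr_le0.
  by have := sb i; rewrite /lo1 (negbTE ik).
have others (x1 x2 : 'cV_n) : forall i, i != k -> cond (fr' i) (lo i) (hi i) (d i) (x1 i 0) (wv x1 i) ->
   cond (fr i) (lo i) (hi i) (d i) (x2 i 0) (wv x2 i) -> 0 <= (wv x1 i - wv x2 i) * (x1 i 0 - x2 i 0).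
  move=> i ik c1 c2; apply: mono (hd i) _ c2; by move: c1; rewrite /fr' (negbTE ik).
have zlo : lo k <= d k * z k 0.
  rewrite leNgt; apply/negP => hz.
  have : z = a.
    apply: mono_all => i; case: (eqVneq i k) => [->|ik].
      rewrite zk; have : z k 0 < a k 0 by rewrite -(ltr_pM2l hdk) ea.
      nra.
    by apply: others => //; have := sa i; rewrite /hi0 (negbTE ik).
  by move=> eza; move: wa; rewrite -eza zk ltxx.
have zhi : d k * z k 0 <= hi k.
  rewrite leNgt; apply/negP => hz.
  have : z = b.
    apply: mono_all => i; case: (eqVneq i k) => [->|ik].
      rewrite zk; have : b k 0 < z k 0 by rewrite -(ltr_pM2l hdk) eb.
      nra.
    by apply: others => //; have := sb i; rewrite /lo1 (negbTE ik).
  by move=> ezb; move: wb; rewrite -ezb zk ltxx.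
exists z => i; case: (eqVneq i k) => [->|ik].
  rewrite /cond (negbTE frk) zlo zhi zk; split => // t _; by rewrite mul0r.
by have := sz i; rewrite /fr' (negbTE ik).
Qed.

End Gen.

Lemma clamp_lo (R : realType) (z : R) : z <= 0 -> clamp01 z = 0.
Proof.
move=> h; rewrite /clamp01 maxEle minEle.
have -> : z <= 1 by lra.
by case: leP => // h0; apply/le_anti; rewrite h h0.
Qed.

Lemma clamp_mid (R : realType) (z : R) : 0 <= z <= 1 -> clamp01 z = z.
Proof. by move=> /andP[h1 h2]; rewrite /clamp01 maxEle minEle h2 h1. Qed.

Lemma clamp_hi (R : realType) (z : R) : 1 <= z -> clamp01 z = 1.
Proof.
move=> h; rewrite /clamp01 maxEle minEle.
case: (eqVneq z 1) => [->|ne]; first by rewrite lexx ler01.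
have -> : z <= 1 = false by lra.
by rewrite ler01.
Qed.

Lemma clamp_iff (R : realType) (tau y w : R) : 0 < tau -> 0 <= y <= 1 ->
  clamp01 (y + tau * w) = y <-> (forall t, 0 <= t <= 1 -> w * (t - y) <= 0).
Proof.
move=> ht /andP[y0 y1]; split.
- move=> e t /andP[t0 t1].
  case: (ltgtP w 0) => hw; last by rewrite hw mul0r.
  + have hh : tau * w < 0 by rewrite pmulr_rlt0.
    apply: mulr_le0_ge0; first exact: ltW. rewrite subr_ge0.
    case: (leP (y + tau * w) 0) => hz.
      by move: e; rewrite clamp_lo // => <-.
    by move: e; rewrite clamp_mid; lra.
  + have hh : 0 < tau * w by rewrite pmulr_rgt0.
    apply: mulr_ge0_le0; first exact: ltW. rewrite subr_le0.
    case: (leP 1 (y + tau * w)) => hz.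
      by move: e; rewrite clamp_hi // => <-.
    by move: e; rewrite clamp_mid; lra.
- move=> H; have H1 := H 1; have H0 := H 0.
  rewrite lexx ler01 /= in H1; rewrite lexx ler01 /= in H0.
  have {}H1 := H1 isT; have {}H0 := H0 isT.
  case: (ltgtP w 0) => hw; last by rewrite hw mulr0 addr0 clamp_mid ?y0.
  + have hh : tau * w < 0 by rewrite pmulr_rlt0.
    have hy : y = 0 by move: H0; rewrite sub0r mulrN oppr_le0 nmulr_rge0 //; lra.
    by rewrite clamp_lo hy //; lra.
  + have hh : 0 < tau * w by rewrite pmulr_rgt0.
    have hy : y = 1 by move: H1; rewrite pmulr_rle0 //; lra.
    by rewrite clamp_hi hy //; lra.
Qed.

Lemma Dx (R : realType) n (d : 'rV[R]_n) (x : 'cV[R]_n) i :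
  (Dmat d *m x) i 0 = d 0 i * x i 0.
Proof. by rewrite /Dmat mul_diag_mx mxE. Qed.

Lemma entry_gen (R : realType) n (y z v : 'cV[R]_n) tau i :
  (tau^-1 *: (- y + map_mx (@clamp01 R) (y + tau *: (z + v)))) i 0 =
  tau^-1 * (- y i 0 + clamp01 (y i 0 + tau * (z i 0 + v i 0))).
Proof. by rewrite !mxE. Qed.

Lemma eq_iff (R : realType) n (d : 'rV[R]_n) W (u : 'cV[R]_n) tau x :
  (forall i, 0 < d 0 i) -> 0 < tau ->
  equilibrium d W u tau x <->
  sol (fun i => d 0 i) (W - Dmat d) (fun i => u i 0) (fun _ => false)
      (fun _ => 0) (fun _ => 1) x.
Proof.
move=> hd ht.
have key : forall i, (f_tau d W u tau x) i 0 = 0 <->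
   clamp01 ((Dmat d *m x) i 0 + tau * (((W - Dmat d) *m x) i 0 + u i 0)) = (Dmat d *m x) i 0.
  move=> i; rewrite /f_tau /clampv /= entry_gen.
  split.
  - move/eqP; rewrite mulf_eq0 invr_eq0 gt_eqF //= => /eqP; lra.
  - by move=> ->; rewrite addNr mulr0.
split.
- move=> [hX hf] i; rewrite /cond /wv -Dx.
  have hXi := hX i; split => //.
  move/andP: (hX i) => [h1 h2].
  move: (congr1 (fun m : 'cV_n => m i 0) hf); rewrite [X in _ = X -> _]mxE => /(proj1 (key i)).
  by move/(@clamp_iff _ _ _ _ ht (hX i)).
- move=> hs; split.
    by move=> i; have := hs i; rewrite /cond /wv -Dx => -[].
  apply/matrixP => i j; rewrite ord1 [RHS]mxE; apply: (proj2 (key i)).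
  have := hs i; rewrite /cond /wv -Dx => -[hb hc].
  exact/(@clamp_iff _ _ _ _ ht hb).
Qed.

Lemma quad (R : realType) n (A : 'M[R]_n) (lam : 'rV[R]_n) (v : 'cV[R]_n) :
  (v^T *m (A^T *m diag_mx lam + diag_mx lam *m A) *m v) 0 0 =
  (\sum_i lam 0 i * (v i 0 * (A *m v) i 0)) *+ 2.
Proof.
have e1 : v^T *m (A^T *m diag_mx lam) *m v = (A *m v)^T *m (diag_mx lam *m v).
  by rewrite trmx_mul !mulmxA.
have e2 : v^T *m (diag_mx lam *m A) *m v = (diag_mx lam *m v)^T *m (A *m v).
  by rewrite trmx_mul tr_diag_mx !mulmxA.
rewrite mulmxDr mulmxDl e1 e2 mul_diag_mx mulr2n !mxE.
by congr (_ + _); apply: eq_bigr => i _; rewrite !mxE; ring.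
Qed.

Theorem proposition2 (R : realType) (n : nat) (d : 'rV[R]_n) (W : 'M[R]_n)
  (u : 'cV[R]_n) (hd : forall i : 'I_n, 0 < d 0 i) :
  (* (i) the equilibrium set does not depend on tau > 0 *)
  (forall tau1 tau2 : R, 0 < tau1 -> 0 < tau2 ->
     forall x : 'cV[R]_n, equilibrium d W u tau1 x <-> equilibrium d W u tau2 x)
  /\
  (* (ii) under Lyapunov diagonal stability of A = W - D, it is a single point *)
  (lyap_diag_stable (W - Dmat d) ->
     forall tau : R, 0 < tau -> exists! x : 'cV[R]_n, equilibrium d W u tau x).
Proof.
split.
  move=> t1 t2 h1 h2 x; split.
    by move=> /(@eq_iff R n d W u t1 x hd h1) H; apply/(@eq_iff R n d W u t2 x hd h2).
  by move=> /(@eq_iff R n d W u t2 x hd h2) H; apply/(@eq_iff R n d W u t1 x hd h1).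
move=> [lam [hlam hneg]] tau ht.
have hQ : forall v : 'cV[R]_n, v != 0 ->
    \sum_i lam 0 i * (v i 0 * ((W - Dmat d) *m v) i 0) < 0.
  move=> v /hneg; rewrite quad mulr2n; lra.
have [x sx] := @exists_sol R n (fun i => d 0 i) (W - Dmat d) (fun i => u i 0)
   (fun i => lam 0 i) hd hlam hQ n (fun _ => false) (fun _ => 0) (fun _ => 1)
   (fun _ => ler01) (leq_trans (max_card _) (eq_leq (card_ord n))).
exists x; split; first by apply/(@eq_iff R n d W u tau x hd ht).
move=> y /(@eq_iff R n d W u tau y hd ht) sy.
exact: (sol_unique hd hlam hQ sx sy).
Qed.
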